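(* Let $G$ be any graph with $n$ nodes and consider the balancing circuit model or the random matching model. Let $x^{(0)}$ be any non-negative integer load vector with $\| x^{(0)} \|_{1} \leq n^{1-\epsilon}$, where $\epsilon > 0$ is a constant. Then the discrepancy after $\tau_{\operatorname{cont}}(1,n^{-1})$ rounds is at most $9/\epsilon$ with probability at least $1-2 n^{-1}$.
   Context: A matching $\mathbf{M}^{(t)}\subseteq E$ of $G=(V,E)$ is identified with the symmetric matrix with entries $1/2$ on $(u,u),(v,v),(u,v),(v,u)$ for $\{u,v\}\in\mathbf{M}^{(t)}$, $1$ on the diagonal for unmatched nodes, $0$ elsewhere. Discrete protocol: for each $\{u,v\}\in\mathbf{M}^{(t)}$ both nodes get $\lfloor (x^{(t-1)}_u+x^{(t-1)}_v)/2\rfloor$ tokens and the excess token (if the sum is odd) goes to $u$ or $v$ with probability $1/2$ each, independently; unmatched nodes keep their load. Continuous process: $\xi^{(t)}=\xi^{(t-1)}\mathbf{M}^{(t)}$. Balancing circuit model: $d$ fixed matchings applied periodically. Random matching model: a random matching each round, independent across rounds, each edge present with probability at least $p_{\min}=\Omega(1/\Delta)$, $\Delta$ the maximum degree. Discrepancy: $\max_{u,v}|x_u-x_v|$. $[t_1,t_2]$ is $(K,\epsilon)$-smoothing if every $\xi^{(t_1)}\in\mathbb{R}^n$ of discrepancy at most $K$ gives $\xi^{(t_2)}$ of discrepancy at most $\epsilon$. $\tau_{\operatorname{cont}}(K,\epsilon)$ is the minimum $t$ with $[0,t]$ $(K,\epsilon)$-smoothing (balancing circuit), resp. the minimum $t$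 such that $[0,t]$ is $(K,\epsilon)$-smoothing with probability at least $1-n^{-1}$ (random matching). *)

(* Defs.v *)
From HB Require Import structures.
From mathcomp Require Import all_boot all_order all_algebra.
From mathcomp Require Import boolp reals exp.
Set Implicit Arguments. Unset Strict Implicit. Unset Printing Implicit Defensive.
Import Order.TTheory GRing.Theory Num.Theory.
Local Open Scope ring_scope.

Definition simple_graph (n : nat) (e : rel 'I_n) : Prop :=
  (forall u v, e u v = e v u) /\ (forall u, ~~ e u u).

Definition is_matching (n : nat) (e : rel 'I_n) (M : {set {set 'I_n}}) : Prop :=
  (forall s, s \in M -> exists u v, [/\ u != v, e u v & s = [set u; v]]) /\
  (forall s t, s \in M -> t \in M -> s != t -> [disjoint s & t]).

Definition matched (n : nat) (M : {set {set 'I_n}}) (u : 'I_n) : bool :=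
  [exists s in M, u \in s].

Definition mmat (R : numFieldType) (n : nat) (M : {set {set 'I_n}}) : 'M[R]_n :=
  \matrix_(u, v) (if u == v then (if matched M u then 2^-1 else 1)
                  else (if [set u; v] \in M then 2^-1 else 0)).

Definition partner (n : nat) (M : {set {set 'I_n}}) (u : 'I_n) : 'I_n :=
  if [pick v | (v != u) && ([set u; v] \in M)] is Some v then v else u.

(* One round of the discrete protocol.  [c] gives one fair coin per node;
   for an edge {u,v} the coin of the smaller endpoint decides: if it is
   true the excess token goes to the smaller endpoint, else to the larger. *)
Definition dstep (n : nat) (M : {set {set 'I_n}}) (c : 'I_n -> bool)
  (x : 'I_n -> nat) : 'I_n -> nat :=
  fun u => let v := partner M u in
    if v == u then x u
    else let s := (x u + x v)%N in
         (s./2 + (odd s && (c (if (u < v)%N then u else v) == (u < v)%N)))%N.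

(* Discrete process: [sched t] is the matching M^(t) of round t >= 1,
   [coins t] the coins used in round t. *)
Fixpoint drun (n : nat) (sched : nat -> {set {set 'I_n}})
  (coins : nat -> 'I_n -> bool) (x0 : 'I_n -> nat) (t : nat) : 'I_n -> nat :=
  match t with
  | 0 => x0
  | t'.+1 => dstep (sched t'.+1) (coins t'.+1) (drun sched coins x0 t')
  end.

Fixpoint prodM (R : numFieldType) (n : nat) (sched : nat -> {set {set 'I_n}})
  (t1 k : nat) : 'M[R]_n :=
  match k with
  | 0 => 1%:M
  | k'.+1 => prodM R sched t1 k' *m mmat R (sched (t1 + k'.+1)%N)
  end.

Definition disc (R : realFieldType) (n : nat) (x : 'rV[R]_n) : R :=
  \big[Num.max/0]_(u < n) \big[Num.max/0]_(v < n) `|x ord0 u - x ord0 v|.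

Definition discn (n : nat) (x : 'I_n -> nat) : nat :=
  \max_(u < n) \max_(v < n) (x u - x v)%N.

Definition smoothing (R : realFieldType) (n : nat) (sched : nat -> {set {set 'I_n}})
  (t1 t2 : nat) (K eps : R) : Prop :=
  forall xi : 'rV[R]_n, disc xi <= K ->
    disc (xi *m prodM R sched t1 (t2 - t1)) <= eps.

Definition bc_sched (n : nat) (Ms : seq {set {set 'I_n}}) (t : nat) : {set {set 'I_n}} :=
  nth set0 Ms ((t.-1) %% size Ms).

Definition is_tau_cont (R : realFieldType) (n : nat) (sched : nat -> {set {set 'I_n}})
  (K eps : R) (T : nat) : Prop :=
  smoothing sched 0 T K eps /\ (forall t, (t < T)%N -> ~ smoothing sched 0 t K eps).

(* Schedule / coins of rounds 1..T from finite functions indexed by 'I_T. *)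
Definition sched_of (n T : nat) (Ms : {ffun 'I_T -> {set {set 'I_n}}}) (t : nat)
  : {set {set 'I_n}} :=
  if insub (t.-1) is Some i then Ms i else set0.

Definition coins_of (n T : nat) (w : {ffun 'I_T * 'I_n -> bool}) (t : nat) (u : 'I_n)
  : bool :=
  if insub (t.-1) is Some i then w (i, u) else false.

(* Probability (uniform over independent fair coins) that the discrete
   process run for T rounds has discrepancy at most b. *)
Definition coin_prob (R : realFieldType) (n : nat) (sched : nat -> {set {set 'I_n}})
  (x0 : 'I_n -> nat) (T : nat) (b : R) : R :=
  (#|[set w : {ffun 'I_T * 'I_n -> bool} |
        (discn (drun sched (coins_of w) x0 T))%:R <= b]|%:R
   / #|{ffun 'I_T * 'I_n -> bool}|%:R).

Definition max_deg (n : nat) (e : rel 'I_n) : nat :=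
  \max_(u < n) #|[set v | e u v]|.

(* Random matching model: a distribution D on sets of edges, supported on
   matchings, each edge in the random matching with probability >= pmin;
   rounds are independent (i.i.d. from D). *)
Definition matching_distr (R : realFieldType) (n : nat) (e : rel 'I_n)
  (D : {ffun {set {set 'I_n}} -> R}) (pmin : R) : Prop :=
  [/\ forall M, 0 <= D M,
      \sum_(M : {set {set 'I_n}}) D M = 1,
      forall M, D M != 0 -> is_matching e M &
      forall u v, e u v -> pmin <= \sum_(M : {set {set 'I_n}} | [set u; v] \in M) D M].

Definition sched_prob (R : realFieldType) (n T : nat) (D : {ffun {set {set 'I_n}} -> R})
  (Ms : {ffun 'I_T -> {set {set 'I_n}}}) : R :=
  \prod_(i < T) D (Ms i).

Definition rm_smooth_prob (R : realType) (n : nat) (D : {ffun {set {set 'I_n}} -> R})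
  (t : nat) (K eps : R) : R :=
  \sum_(Ms : {ffun 'I_t -> {set {set 'I_n}}} | `[< smoothing (sched_of Ms) 0 t K eps >])
     sched_prob D Ms.

Definition is_tau_cont_rm (R : realType) (n : nat) (D : {ffun {set {set 'I_n}} -> R})
  (K eps : R) (T : nat) : Prop :=
  1 - (n%:R)^-1 <= rm_smooth_prob D T K eps /\
  (forall t, (t < T)%N -> rm_smooth_prob D t K eps < 1 - (n%:R)^-1).

Definition rm_disc_prob (R : realType) (n : nat) (D : {ffun {set {set 'I_n}} -> R})
  (x0 : 'I_n -> nat) (T : nat) (b : R) : R :=
  \sum_(Ms : {ffun 'I_T -> {set {set 'I_n}}})
     sched_prob D Ms * coin_prob (sched_of Ms) x0 T b.

(* Main.v *)
Require Import Defs.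
From HB Require Import structures.
From mathcomp Require Import all_boot all_order all_algebra.
From mathcomp Require Import boolp reals exp.
From mathcomp Require Import ring lra.
Import Order.TTheory GRing.Theory Num.Theory.
Local Open Scope ring_scope.
Set Implicit Arguments. Unset Strict Implicit.


Section Partner.
Variables (n : nat) (e : rel 'I_n) (M : {set {set 'I_n}}).
Hypothesis hM : is_matching e M.

Lemma partner_in u : partner M u != u -> [set u; partner M u] \in M.
Proof.
rewrite /partner; case: pickP => [v /andP[_ H]|_] //; by rewrite eqxx.
Qed.

Lemma partner_eq u v : v != u -> [set u; v] \in M -> partner M u = v.
Proof.
move=> vu Huv; rewrite /partner; case: pickP => [w /andP[wu Hw]|H]; last first.
  by have:= H v; rewrite vu Huv.
case: (eqVneq w v) => // wv.
have neq : [set u; w] != [set u; v].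
  apply/negP => /eqP E; have : v \in [set u; w] by rewrite E set22.
  by rewrite in_set2 (negPf vu) eq_sym (negPf wv).
have D := hM.2 _ _ Hw Huv neq.
have := disjointFr D (set21 u w).
by rewrite set21.
Qed.

Lemma partnerK u : partner M (partner M u) = u.
Proof.
case: (eqVneq (partner M u) u) => [E|H]; first by rewrite E E.
apply: partner_eq; first by rewrite eq_sym.
by rewrite setUC; apply: partner_in.
Qed.

Lemma matchedE u : matched M u = (partner M u != u).
Proof.
apply/idP/idP.
  case/existsP => s /andP[Hs us].
  have [a [b [ab _ sE]]] := hM.1 s Hs.
  move: us; rewrite sE in_set2 => /orP[]/eqP ->.
    have P : partner M a = b by apply: partner_eq; [rewrite eq_sym | rewrite -sE].
    by rewrite P eq_sym.
  have P : partner M b = a by apply: partner_eq; [ | rewrite setUC -sE].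
  by rewrite P.
move=> H; apply/existsP; exists [set u; partner M u]; by rewrite partner_in // set21.
Qed.

Lemma mmat_entry (R : numFieldType) u v : (mmat R M) u v =
  if u == v then (if partner M u == u then 1 else 2^-1)
  else (if partner M u == v then 2^-1 else 0).
Proof.
rewrite mxE; case: (eqVneq u v) => [->|uv]; first by rewrite matchedE; case: eqP.
case: (eqVneq (partner M u) v) => [E|pv].
  have pu : partner M u != u by rewrite E eq_sym.
  by rewrite -E partner_in.
case: ifP => // H; move: pv; rewrite (@partner_eq u v) ?eqxx //; by rewrite eq_sym.
Qed.

Lemma mmat_mul (R : numFieldType) (y : 'I_n -> R) u :
  \sum_v mmat R M u v * y v =
  if partner M u == u then y u else (y u + y (partner M u)) / 2.
Proof.
rewrite (bigD1 u) //= mmat_entry eqxx.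
case: (eqVneq (partner M u) u) => [E|E].
  rewrite big1 ?addr0 ?mul1r // => v vu; rewrite mmat_entry eq_sym (negPf vu) E.
  by rewrite eq_sym (negPf vu) mul0r.
rewrite (bigD1 (partner M u)) /=; last by [].
rewrite mmat_entry eq_sym (negPf E) eqxx big1 ?addr0.
  by rewrite -mulrDr mulrC.
move=> v /andP[vu vp]; rewrite mmat_entry eq_sym (negPf vu) eq_sym (negPf vp).
by rewrite mul0r.
Qed.

Lemma mmat_ge0 (R : numFieldType) u v : 0 <= (mmat R M) u v.
Proof. rewrite mmat_entry; case: ifP => _; case: ifP => _ //; by rewrite invr_ge0 ler0n. Qed.

Lemma mmat_row1 (R : numFieldType) u : \sum_v mmat R M u v = 1.
Proof.
have := @mmat_mul R (fun _ => 1) u; under eq_bigr do rewrite mulr1.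
move=> ->; case: ifP => // _; by rewrite -[1 + 1]/(2%:R) divff // pnatr_eq0.
Qed.

End Partner.


Section Prod.
Variables (n : nat) (e : rel 'I_n) (sched : nat -> {set {set 'I_n}}).
Hypothesis hs : forall t, is_matching e (sched t).

Lemma prodM_ge0 (R : numFieldType) k u v : 0 <= prodM R sched 0 k u v.
Proof.
elim: k u v => [|k IH] u v /=; first by rewrite mxE ler0n.
rewrite mxE; apply: sumr_ge0 => w _; apply: mulr_ge0; first exact: IH.
exact: (mmat_ge0 (hs _)).
Qed.

Lemma prodM_row1 (R : numFieldType) k u : \sum_v prodM R sched 0 k u v = 1.
Proof.
elim: k u => [|k IH] u /=.
  rewrite (bigD1 u) //= !mxE eqxx /= big1 ?addr0 // => v vu.
  by rewrite !mxE eq_sym (negbTE vu).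
under eq_bigr do rewrite mxE.
rewrite exchange_big /=.
under eq_bigr do rewrite -mulr_sumr (mmat_row1 (hs _)) mulr1.
exact: IH.
Qed.

Lemma entry_le (R : realFieldType) T u w : (0 < n)%N ->
  smoothing sched 0 T (1:R) (n%:R^-1) -> prodM R sched 0 T u w <= 2 / n%:R.
Proof.
move=> n0 Hs.
have Hd1 : disc (\row_j (if j == u then 1 else 0) : 'rV[R]_n) <= 1.
  rewrite /disc; apply: bigmax_le => // i _; apply: bigmax_le => // j _.
  rewrite !mxE; case: ifP => _; case: ifP => _.
  - by rewrite subrr normr0.
  - by rewrite subr0 normr1.
  - by rewrite sub0r normrN normr1.
  - by rewrite subrr normr0.
have := Hs _ Hd1; rewrite subn0 => Hd.
set P := prodM R sched 0 T in Hd *.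
have row : forall j, ((\row_j (if j == u then 1 else 0) : 'rV[R]_n) *m P) ord0 j = P u j.
  move=> j; rewrite mxE (bigD1 u) //= mxE eqxx mul1r big1 ?addr0 // => i iu.
  by rewrite mxE (negbTE iu) mul0r.
have H : forall j, P u w - P u j <= n%:R^-1.
  move=> j; apply: le_trans Hd; apply: le_trans (ler_norm _) _.
  rewrite -row -(row j) /disc.
  apply: le_trans (le_bigmax _ _ w).
  exact: (le_bigmax _ (fun v => `|_ - _ ord0 v|) j).
have : \sum_(j < n) (P u w - P u j) <= \sum_(j < n) n%:R^-1 by apply: ler_sum => j _; exact: H.
have nn0 : n%:R != 0 :> R by rewrite pnatr_eq0 -lt0n.
rewrite sumrB prodM_row1 !sumr_const cardT size_enum_ord.
rewrite -[P u w *+ n]mulr_natl -[n%:R^-1 *+ n]mulr_natl mulfV // => Hle.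
rewrite ler_pdivlMr ?ltr0n // mulrC; lra.
Qed.

End Prod.


Lemma pair_ineq (R : realFieldType) (a b : R) (s : nat) : 0 <= a -> 0 <= b ->
  (1 + a) ^+ (s./2 + odd s) * (1 + b) ^+ (s./2) +
  (1 + a) ^+ (s./2) * (1 + b) ^+ (s./2 + odd s) <= 2 * (1 + (a + b) / 2) ^+ s.
Proof.
move=> a0 b0.
set h := s./2; set c := 1 + (a + b) / 2.
have key : (1 + a) * (1 + b) <= c ^+ 2.
  rewrite /c expr2; have := sqr_ge0 (a - b); rewrite expr2; nra.
have X0 : 0 <= (1 + a) * (1 + b) by apply: mulr_ge0; lra.
have kh : ((1 + a) * (1 + b)) ^+ h <= (c ^+ 2) ^+ h.
  apply: lerXn2r; rewrite ?nnegrE // sqr_ge0 //.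
have sE := odd_double_half s; rewrite -/h in sE.
have c0 : 0 <= c by rewrite /c; lra.
move: sE; case: (odd s) => /= sE; rewrite -sE.
  rewrite -mul2n (exprD c) (exprM c) expr1 addn1 (exprSr (1 + a)) (exprSr (1 + b)).
  rewrite exprMn in kh.
  have -> : (1 + a) ^+ h * (1 + a) * (1 + b) ^+ h + (1 + a) ^+ h * ((1 + b) ^+ h * (1 + b))
     = (2 * c) * ((1 + a) ^+ h * (1 + b) ^+ h) by rewrite /c; field.
  rewrite -mulrA; apply: ler_wpM2l => //; apply: ler_wpM2l => //.
rewrite -mul2n add0n addn0 (exprM c) -exprMn -mulr2n.
rewrite -[X in X <= _]mulr_natl.
by apply: ler_wpM2l.
Qed.

Section Step.
Variables (n : nat) (e : rel 'I_n) (M : {set {set 'I_n}}).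
Hypothesis hM : is_matching e M.
Local Notation p := (partner M).

Definition gi (u : 'I_n) : 'I_n := if (u < p u)%N then u else p u.

Definition Dv (x : 'I_n -> nat) (u : 'I_n) (b : bool) : nat :=
  if p u == u then x u else
  let s := (x u + x (p u))%N in (s./2 + (odd s && (b == (u < p u)%N)))%N.

Lemma dstepE c x u : dstep M c x u = Dv x u (c (gi u)).
Proof. by rewrite /dstep /Dv /gi. Qed.

Lemma gi_inv u j : gi u = j -> u = j \/ u = p j.
Proof.
rewrite /gi; case: ifP => _ H; [by left | right; by rewrite -H (partnerK hM)].
Qed.

Lemma group_prod (R : comPzSemiRingType) (H : 'I_n -> R) j :
  \prod_(u | gi u == j) H u =
  if p j == j then H j else if (j < p j)%N then H j * H (p j) else 1.
Proof.
have pK := partnerK hM.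
case: (eqVneq (p j) j) => E.
  rewrite (bigD1 j) /=; last by rewrite /gi E ltnn.
  rewrite big1 ?mulr1 // => u /andP[/eqP/gi_inv [->|]]; first by rewrite eqxx.
  by rewrite E => ->; rewrite eqxx.
case: ltnP => lt.
  rewrite (bigD1 j) /=; last by rewrite /gi lt.
  rewrite (bigD1 (p j)) /=; last first.
    by rewrite E /gi pK ltnNge (ltnW lt) /= eqxx.
  rewrite big1 ?mulr1 // => u /andP[/andP[/eqP/gi_inv gu uj] up].
  by case: gu => E'; [rewrite E' eqxx in uj | rewrite E' eqxx in up].
have lt' : (p j < j)%N by rewrite ltn_neqAle E lt.
rewrite big1 // => u /eqP gu; have [uE|uE] := gi_inv gu; move: gu; rewrite uE /gi.
  by rewrite ltnNge lt /= => /eqP; rewrite (negPf E).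
by rewrite pK lt' => /eqP; rewrite (negPf E).
Qed.
Lemma step_bound (R : realFieldType) (x : 'I_n -> nat) (y : 'I_n -> R) :
  (forall u, 0 <= y u) ->
  \sum_(c : {ffun 'I_n -> bool}) \prod_u (1 + y u) ^+ (dstep M c x u)
  <= 2 ^+ n * \prod_u (1 + \sum_v mmat R M u v * y v) ^+ (x u).
Proof.
move=> y0.
have pK := partnerK hM.
pose F u b := (1 + y u) ^+ (Dv x u b).
pose G u := (1 + \sum_v mmat R M u v * y v) ^+ (x u).
have F0 : forall u b, 0 <= F u b by move=> u b; apply: exprn_ge0; have := y0 u; lra.
have E1 : forall c : {ffun 'I_n -> bool}, \prod_u (1 + y u) ^+ (dstep M c x u)
   = \prod_j \prod_(u | gi u == j) F u (c j).
  move=> c; rewrite (partition_big gi xpredT) //=.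
  apply: eq_bigr => j _; apply: eq_bigr => u /eqP <-; by rewrite dstepE.
rewrite (eq_bigr _ (fun c _ => E1 c)).
rewrite -(bigA_distr_bigA (fun j b => \prod_(u | gi u == j) F u b)) /=.
have E2 : 2 ^+ n * \prod_u G u = \prod_j (2 * \prod_(u | gi u == j) G u).
  rewrite big_split /= prodr_const cardT size_enum_ord; congr (_ * _).
  by rewrite (partition_big gi xpredT).
rewrite -/G E2; apply: ler_prod => j _; apply/andP; split.
  apply: sumr_ge0 => b _; apply: prodr_ge0 => u _; exact: F0.
rewrite big_bool /= !group_prod.
case: (eqVneq (p j) j) => E.
  rewrite /F /Dv /G E eqxx (mmat_mul hM) E eqxx -mulr2n -mulr_natl.
  by rewrite mulr1 mulr_natl.
case: ltnP => lt; last by rewrite mulr1.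
have E' : (j == p j) = false by rewrite eq_sym (negPf E).
have lt2 : (p j < j)%N = false by rewrite ltnNge ltnW.
rewrite /F /G /Dv (negPf E) pK E' lt lt2 /= andbT andbF addn0.
rewrite !(mmat_mul hM) (negPf E) pK E' (addrC (y (p j))) -exprD (addnC (x (p j))).
have -> : (false == true) = false by []. have -> : (false == false) = true by [].
rewrite andbT andbF addn0.
apply: pair_ineq; exact: y0.
Qed.


End Step.


Section Coins.
Variables (n T : nat).

Definition join (w : {ffun 'I_T * 'I_n -> bool}) (c : {ffun 'I_n -> bool})
  : {ffun 'I_T.+1 * 'I_n -> bool} :=
  [ffun q : 'I_T.+1 * 'I_n =>
     match (insub (nat_of_ord q.1) : option 'I_T) with Some i => w (i, q.2) | None => c q.2 end].

Definition split1 (w : {ffun 'I_T.+1 * 'I_n -> bool}) : {ffun 'I_T * 'I_n -> bool} :=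
  [ffun q : 'I_T * 'I_n => w (widen_ord (leqnSn T) q.1, q.2)].
Definition split2 (w : {ffun 'I_T.+1 * 'I_n -> bool}) : {ffun 'I_n -> bool} :=
  [ffun u => w (ord_max, u)].

Lemma sum_split (R : nmodType) (f : {ffun 'I_T.+1 * 'I_n -> bool} -> R) :
  \sum_w f w = \sum_(w : {ffun 'I_T * 'I_n -> bool}) \sum_(c : {ffun 'I_n -> bool}) f (join w c).
Proof.
rewrite pair_big /= (reindex (fun q => join q.1 q.2)) //=.
apply: onW_bij; exists (fun w => (split1 w, split2 w)).
  move=> [w c] /=; congr pair; apply/ffunP => [[i u]]; rewrite !ffunE /=.
    by rewrite (_ : insub (nat_of_ord i) = Some i) // valK.
  by rewrite insubF //= ltnn.
move=> w; apply/ffunP => [[i u]]; rewrite !ffunE /=.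
case: insubP => [k kT kE|nT]; rewrite ?ffunE.
  by congr (w (_, _)); apply: val_inj.
congr (w (_, _)); apply: val_inj => /=.
by apply/eqP; rewrite eqn_leq leqNgt nT /= -ltnS ltn_ord.
Qed.

Lemma coins_join_lt w c t u : (0 < t <= T)%N -> coins_of (join w c) t u = coins_of w t u.
Proof.
case/andP => t0 tT; rewrite /coins_of; case: insubP => [i it iE|nt] /=.
  rewrite ffunE /= (_ : nat_of_ord i = t.-1) //.
  by case: insubP => // /negP; rewrite prednK.
by move: nt; rewrite ltnS (leq_trans (leq_pred t) tT).
Qed.

Lemma coins_join_last w c u : coins_of (join w c) T.+1 u = c u.
Proof.
rewrite /coins_of; case: insubP => [i it iE|nt] /=.
  by rewrite ffunE /= (_ : nat_of_ord i = T) // insubF //= ltnn.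
by move: nt; rewrite ltnSn.
Qed.

End Coins.

Lemma drun_ext n (sched : nat -> {set {set 'I_n}}) c1 c2 x0 T :
  (forall t u, (0 < t <= T)%N -> c1 t u = c2 t u) ->
  drun sched c1 x0 T = drun sched c2 x0 T.
Proof.
elim: T => [//|T IH] H /=.
rewrite IH; last by move=> t u /andP[t0 tT]; apply: H; rewrite t0 leqW.
congr dstep; apply: funext => u; apply: H; by rewrite /= leqnn.
Qed.

Lemma eqW_ (R : numDomainType) (a b : R) : a = b -> a <= b.
Proof. by move->. Qed.

Section Ind.
Variables (n : nat) (e : rel 'I_n) (sched : nat -> {set {set 'I_n}}).
Hypothesis hs : forall t, is_matching e (sched t).

Lemma id_mul (R : numFieldType) (y : 'I_n -> R) u :
  \sum_v prodM R sched 0 0 u v * y v = y u.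
Proof.
rewrite /= (bigD1 u) //= mxE eqxx mul1r big1 ?addr0 // => v vu.
by rewrite mxE eq_sym (negbTE vu) mul0r.
Qed.

Lemma coin_sum_bound (R : realFieldType) T (x0 : 'I_n -> nat) (y : 'I_n -> R) :
  (forall u, 0 <= y u) ->
  \sum_(w : {ffun 'I_T * 'I_n -> bool})
     \prod_u (1 + y u) ^+ (drun sched (coins_of w) x0 T u)
  <= 2 ^+ (T * n) * \prod_u (1 + \sum_v prodM R sched 0 T u v * y v) ^+ (x0 u).
Proof.
elim: T y => [|T IH] y y0.
  rewrite (eq_bigr (fun _ => \prod_u (1 + y u) ^+ x0 u)) //.
  rewrite sumr_const card_ffun card_prod !card_ord /= mul0n expn0 expr0 mulr1n mul1r.
  by apply: eqW_; apply: eq_bigr => u _; rewrite id_mul.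
rewrite sum_split.
have E : forall (w : {ffun 'I_T * 'I_n -> bool}) (c : {ffun 'I_n -> bool}),
   drun sched (coins_of (join w c)) x0 T.+1 =
   dstep (sched T.+1) c (drun sched (coins_of w) x0 T).
  move=> w c /=; rewrite (@drun_ext _ _ _ (coins_of w)); last first.
    by move=> t u tT; apply: coins_join_lt.
  congr dstep; apply: funext => u; exact: coins_join_last.
rewrite (eq_bigr (fun w => \sum_(c : {ffun 'I_n -> bool}) \prod_u (1 + y u) ^+ dstep (sched T.+1) c (drun sched (coins_of w) x0 T) u)); last first.
  by move=> w _; apply: eq_bigr => c _; rewrite E.
pose y' v := \sum_w mmat R (sched T.+1) v w * y w.
have y'0 : forall v, 0 <= y' v.
  move=> v; apply: sumr_ge0 => w _; apply: mulr_ge0 => //; exact: (mmat_ge0 (hs _)).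
apply: le_trans (_ : \sum_(w : {ffun 'I_T * 'I_n -> bool}) 2 ^+ n *
     \prod_u (1 + y' u) ^+ (drun sched (coins_of w) x0 T u) <= _).
  apply: ler_sum => w _; exact: (step_bound (hs _)).
rewrite -mulr_sumr.
apply: le_trans (_ : 2 ^+ n * (2 ^+ (T * n) * \prod_u (1 + \sum_v prodM R sched 0 T u v * y' v) ^+ (x0 u)) <= _).
  apply: ler_wpM2l; [exact: exprn_ge0 | exact: IH].
rewrite mulrA -exprD -mulSn /=.
apply: eqW_; congr (_ * _); apply: eq_bigr => u _; congr (_ ^+ _); congr (_ + _).
rewrite /y'; under eq_bigr do rewrite mulr_sumr.
rewrite exchange_big /=; apply: eq_bigr => w _; rewrite mxE mulr_suml.
by apply: eq_bigr => v _; rewrite mulrA.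
Qed.

End Ind.


Lemma bern (R : realFieldType) (a : R) m : 0 <= a -> (1 + a) ^+ m * (1 - m%:R * a) <= 1.
Proof.
move=> a0; elim: m => [|m IH]; first by rewrite expr0 mul0r subr0 mul1r.
have P0 : 0 <= (1 + a) ^+ m by apply: exprn_ge0; lra.
apply: le_trans IH; rewrite exprS -natr1.
set P := (1 + a) ^+ m in P0 *; set mm := m%:R.
have m0 : 0 <= mm by rewrite /mm ler0n.
have h : 0 <= P * ((mm + 1) * (a * a)).
  by apply: mulr_ge0 => //; apply: mulr_ge0; [lra | apply: mulr_ge0].
nra.
Qed.

Lemma bern2 (R : realFieldType) (a : R) m : 0 <= a -> m%:R * a <= 2^-1 -> (1 + a) ^+ m <= 2.
Proof.
move=> a0 ma; have := bern m a0.
have P0 : 0 <= (1 + a) ^+ m by apply: exprn_ge0; lra.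
set P := (1 + a) ^+ m in P0 *; set q := m%:R * a in ma *.
move=> h; nra.
Qed.

Section Node.
Variables (n : nat) (e : rel 'I_n) (sched : nat -> {set {set 'I_n}}).
Hypothesis hs : forall t, is_matching e (sched t).

Lemma per_node (R : realFieldType) T (x0 : 'I_n -> nat) (t : R) u :
  (0 < n)%N -> smoothing sched 0 T (1:R) (n%:R^-1) -> 0 <= t ->
  \sum_(w : {ffun 'I_T * 'I_n -> bool}) (1 + t) ^+ (drun sched (coins_of w) x0 T u)
  <= 2 ^+ (T * n) * (1 + 2 * t / n%:R) ^+ (\sum_v x0 v)%N.
Proof.
move=> n0 Hs t0.
pose y v : R := if v == u then t else 0.
have y0 : forall v, 0 <= y v by move=> v; rewrite /y; case: ifP.
have := coin_sum_bound hs T x0 y0.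
have E1 : forall X : 'I_n -> nat, \prod_v (1 + y v) ^+ X v = (1 + t) ^+ X u.
  move=> X; rewrite (bigD1 u) //= /y eqxx big1 ?mulr1 // => v vu.
  by rewrite (negbTE vu) addr0 expr1n.
rewrite (eq_bigr _ (fun w _ => E1 (drun sched (coins_of w) x0 T))).
move/le_trans; apply; apply: ler_wpM2l; first exact: exprn_ge0.
rewrite -prodrXr; apply: ler_prod => v _; apply/andP; split.
  apply: exprn_ge0; apply: addr_ge0 => //; apply: sumr_ge0 => v' _.
  by apply: mulr_ge0; [exact: prodM_ge0 hs _ _ _ _ | exact: y0].
apply: lerXn2r.
- rewrite nnegrE; apply: addr_ge0 => //; apply: sumr_ge0 => v' _.
  by apply: mulr_ge0; [exact: prodM_ge0 hs _ _ _ _ | exact: y0].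
- by rewrite nnegrE; apply: addr_ge0 => //; apply: divr_ge0; [apply: mulr_ge0 | ].
rewrite lerD2l (bigD1 u) //= big1 ?addr0; last first.
  by move=> v' vu; rewrite /y (negbTE vu) mulr0.
have he := @entry_le _ _ _ hs R T v u n0 Hs.
rewrite /y eqxx (_ : 2 * t / n%:R = t * (2 / n%:R)); last by rewrite mulrA (mulrC t).
by rewrite mulrC; apply: ler_wpM2l.
Qed.

End Node.


Lemma coin_main (R : realType) (eps : R) (heps : 0 < eps) n (e : rel 'I_n)
  (sched : nat -> {set {set 'I_n}}) (hs : forall t, is_matching e (sched t))
  (x0 : 'I_n -> nat) T :
  (2 * 4 ^ (Num.truncn (9 / eps)).+1 <= n)%N ->
  (\sum_(u < n) x0 u)%:R <= (n%:R) `^ (1 - eps) ->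
  smoothing sched 0 T (1:R) (n%:R^-1) ->
  1 - n%:R^-1 <= coin_prob sched x0 T (9 / eps).
Proof.
set k := (Num.truncn (9 / eps)).+1 => Hn Hm Hs.
have n0 : (0 < n)%N by apply: leq_trans Hn; rewrite muln_gt0 expn_gt0.
have nR : 0 < n%:R :> R by rewrite ltr0n.
set N := n%:R `^ eps.
set m := (\sum_(u < n) x0 u)%N in Hm.
have N0 : 0 < N by apply: powR_gt0.
have mN : m%:R * N <= n%:R.
  have E : n%:R `^ (1 - eps) * N = n%:R.
    rewrite /N -powRD; last by rewrite pnatr_eq0 -lt0n n0 implybT.
    by rewrite subrK powRr1 // ler0n.
  by rewrite -[X in _ <= X]E; apply: ler_wpM2r => //; apply: ltW.
have ek : 3 <= eps * k%:R.
  have := truncnS_gt (9 / eps); rewrite -/k ltr_pdivrMr // mulrC => h; lra.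
have NK : n%:R ^+ 3 <= N ^+ k.
  rewrite -(powR_mulrn k (ltW N0)) /N -powRrM -(powR_mulrn 3 (ler0n R n)).
  by apply: ler_powR => //; rewrite ler1n.
set t := N / 4.
have t0 : 0 <= t by rewrite /t; apply: divr_ge0; [apply: ltW | ].
set X := fun w : {ffun 'I_T * 'I_n -> bool} => drun sched (coins_of w) x0 T.
set C : R := 2 ^+ (T * n).
have C0 : 0 < C by rewrite /C exprn_gt0.
have per : forall u, \sum_(w : {ffun 'I_T * 'I_n -> bool}) (1 + t) ^+ (X w u) <= C * 2.
  move=> u; apply: le_trans (per_node hs x0 u n0 Hs t0) _; apply: ler_wpM2l.
    exact: exprn_ge0.
  apply: bern2.
    by apply: divr_ge0; [apply: mulr_ge0 | apply: ltW].
  rewrite -/m.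
  have q1 : m%:R * N / n%:R <= 1.
    rewrite ler_pdivrMr // mul1r. exact: mN.
  have -> : m%:R * (2 * t / n%:R) = (m%:R * N / n%:R) / 2 by rewrite /t; field;
    rewrite pnatr_eq0 -lt0n n0.
  lra.
rewrite /coin_prob.
set G := [set w | _].
have cardO : #|{ffun 'I_T * 'I_n -> bool}|%:R = C :> R.
  by rewrite card_ffun card_prod !card_ord card_bool natrX.
set B : R := \sum_(w : {ffun 'I_T * 'I_n -> bool}) (if w \in G then 0 else 1).
have cardG : #|G|%:R = C - B.
  have cC : #|~: G|%:R = B :> R.
    rewrite -sum1_card natr_sum /B big_mkcond /=; apply: eq_bigr => w _.
    by rewrite in_setC; case: (w \in G).
  have := cardsC G; move/(congr1 (fun z => z%:R : R)); rewrite natrD cardO cC => <-.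
  by rewrite addrK.
rewrite cardG cardO.
suff hB : B <= C / n%:R.
  rewrite ler_pdivlMr // mulrBl mul1r lerD2l lerN2 mulrC.
  by move: hB; rewrite mulrC.
have t1 : 0 <= 1 + t by lra.
have Bw : forall w, (if w \in G then 0 else 1) <= \sum_(u < n) (if (k <= X w u)%N then 1 else 0) :> R.
  move=> w; case: ifP => g.
    by apply: sumr_ge0 => u _; case: ifP.
  case: (pickP (fun u => (k <= X w u)%N)) => [u ku|H].
    rewrite (bigD1 u) //= ku lerDl; apply: sumr_ge0 => v _; by case: ifP.
  exfalso; move: g; rewrite inE.
  have dk : (discn (X w) <= Num.truncn (9 / eps))%N.
    rewrite /discn; apply/bigmax_leqP => u _; apply/bigmax_leqP => v _.
    apply: leq_trans (leq_subr _ _) _; by rewrite -ltnS ltnNge H.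
  have : (discn (X w))%:R <= 9 / eps.
    apply: le_trans (_ : (Num.truncn (9 / eps))%:R <= _); first by rewrite ler_nat.
    rewrite truncn_le; apply: divr_ge0 => //; exact: ltW.
  by move=> ->.
have Mk : forall u w, (if (k <= X w u)%N then 1 else 0) * (1 + t) ^+ k <= (1 + t) ^+ (X w u) :> R.
  move=> u w; case: ifP => h; last by rewrite mul0r exprn_ge0.
  by rewrite mul1r; apply: ler_weXn2l => //; lra.
have B0 : 0 <= B by apply: sumr_ge0 => w _; case: ifP.
have hB1 : B * (1 + t) ^+ k <= n%:R * (C * 2).
  rewrite /B mulr_suml.
  apply: le_trans (_ : \sum_(w : {ffun 'I_T * 'I_n -> bool})
     (\sum_(u < n) (if (k <= X w u)%N then 1 else 0)) * (1 + t) ^+ k <= _).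
    apply: ler_sum => w _; apply: ler_wpM2r; [exact: exprn_ge0 | exact: Bw].
  under eq_bigr do rewrite mulr_suml.
  rewrite exchange_big /=.
  apply: le_trans (_ : \sum_(u < n) (C * 2) <= _); last first.
    by rewrite sumr_const cardT size_enum_ord mulr_natl.
  apply: ler_sum => u _; apply: le_trans (per u); apply: ler_sum => w _; exact: Mk.
have K0 : 0 < 4 ^+ k :> R by rewrite exprn_gt0.
have tk : n%:R ^+ 3 / 4 ^+ k <= (1 + t) ^+ k.
  apply: le_trans (_ : t ^+ k <= _); last by apply: lerXn2r; rewrite ?nnegrE //; lra.
  rewrite /t exprMn exprVn; apply: ler_wpM2r => //.
  by rewrite invr_ge0 ltW.
have hn : 2 * 4 ^+ k <= n%:R :> R.
  by move: Hn; rewrite -(ler_nat R) natrM natrX.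
have hc : B * (n%:R ^+ 3 / 4 ^+ k) <= n%:R * (C * 2).
  by apply: le_trans hB1; apply: ler_wpM2l.
rewrite (mulrA B) ler_pdivrMr // in hc.
have h2 : n%:R * (C * 2) * 4 ^+ k <= C * n%:R ^+ 2.
  have : n%:R * C * (2 * 4 ^+ k) <= n%:R * C * n%:R.
    by apply: ler_wpM2l => //; apply: mulr_ge0; apply: ltW.
  have -> : n%:R * (C * 2) * 4 ^+ k = n%:R * C * (2 * 4 ^+ k) by ring.
  have -> : C * n%:R ^+ 2 = n%:R * C * n%:R by ring.
  by [].
rewrite ler_pdivlMr //.
have n2 : 0 < n%:R ^+ 2 :> R by rewrite exprn_gt0.
rewrite -(ler_pM2r n2).
have -> : B * n%:R * n%:R ^+ 2 = B * n%:R ^+ 3 by ring.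
exact: le_trans hc h2.
Qed.


Lemma set0_matching n (e : rel 'I_n) : is_matching e set0.
Proof. by split => [s|s t]; rewrite inE. Qed.

Unset Implicit Arguments.

Theorem corollary3p4 (R : realType) (eps : R) (heps : 0 < eps) :
  (* balancing circuit model *)
  (exists n0 : nat, forall (n : nat) (e : rel 'I_n),
     (n0 <= n)%N -> simple_graph e ->
     forall (Ms : seq {set {set 'I_n}}), (0 < size Ms)%N ->
     (forall M, M \in Ms -> is_matching e M) ->
     forall (x0 : 'I_n -> nat),
     (\sum_(u < n) x0 u)%:R <= (n%:R) `^ (1 - eps) ->
     forall T : nat, is_tau_cont (bc_sched Ms) (1 : R) (n%:R)^-1 T ->
     1 - 2 / n%:R <= coin_prob (bc_sched Ms) x0 T (9 / eps))
  /\
  (* random matching model, p_min >= c / Delta for a constant c > 0 *)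
  (forall c : R, 0 < c ->
   exists n0 : nat, forall (n : nat) (e : rel 'I_n),
     (n0 <= n)%N -> simple_graph e ->
     forall (D : {ffun {set {set 'I_n}} -> R}),
     matching_distr e D (c / (max_deg e)%:R) ->
     forall (x0 : 'I_n -> nat),
     (\sum_(u < n) x0 u)%:R <= (n%:R) `^ (1 - eps) ->
     forall T : nat, is_tau_cont_rm D 1 (n%:R)^-1 T ->
     1 - 2 / n%:R <= rm_disc_prob D x0 T (9 / eps)).
Proof.
set k := (Num.truncn (9 / eps)).+1.
have npos : forall n, (2 * 4 ^ k <= n)%N -> (0 < n)%N.
  by move=> n Hn; apply: leq_trans Hn; rewrite muln_gt0 expn_gt0.
have half : forall n, (0 < n)%N -> 1 - 2 / n%:R <= 1 - n%:R^-1 :> R.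
  move=> n n0; have : 0 <= n%:R^-1 :> R by rewrite invr_ge0 ler0n.
  set z := n%:R^-1; lra.
split.
  exists (2 * 4 ^ k)%N => n e Hn _ Ms sz HM x0 Hm T [Hs _].
  apply: le_trans (half _ (npos _ Hn)) _.
  have hs : forall t, is_matching e (bc_sched Ms t).
    by move=> t; apply: HM; rewrite /bc_sched mem_nth // ltn_pmod.
  exact: (coin_main heps hs Hn Hm Hs).
move=> c c0; exists (2 * 4 ^ k)%N => n e Hn _ D [D0 D1 DM _] x0 Hm T [Hs _].
have n0 := npos _ Hn.
set w := n%:R^-1 : R.
have w0 : 0 <= w by rewrite invr_ge0 ler0n.
have w1 : w <= 1 by rewrite /w invf_le1 ?ltr0n // ler1n.
set z := 1 - w.
have z0 : 0 <= z by rewrite /z; lra.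
have sp0 : forall Ms : {ffun 'I_T -> {set {set 'I_n}}}, 0 <= sched_prob D Ms.
  by move=> Ms; apply: prodr_ge0 => i _; exact: D0.
have term : forall Ms : {ffun 'I_T -> {set {set 'I_n}}},
    (if `[< smoothing (sched_of Ms) 0 T (1:R) n%:R^-1 >] then sched_prob D Ms * z else 0)
    <= sched_prob D Ms * coin_prob (sched_of Ms) x0 T (9 / eps).
  move=> Ms; case: ifP => [/asboolP S|_]; last first.
    by apply: mulr_ge0 => //; rewrite /coin_prob; apply: divr_ge0; exact: ler0n.
  case: (eqVneq (sched_prob D Ms) 0) => [->|nz]; first by rewrite !mul0r.
  apply: ler_wpM2l => //.
  have hs : forall t, is_matching e (sched_of Ms t).
    move=> t; rewrite /sched_of; case: insubP => [i _ _|_]; last exact: set0_matching.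
    apply: DM; apply/negP => /eqP Di; move: nz.
    by rewrite /sched_prob (bigD1 i) //= Di mul0r eqxx.
  exact: (coin_main heps hs Hn Hm S).
apply: le_trans (_ : z * z <= _).
  rewrite /z; nra.
apply: le_trans (_ : z * rm_smooth_prob D T 1 n%:R^-1 <= _).
  by apply: ler_wpM2l.
rewrite /rm_smooth_prob /rm_disc_prob big_mkcond mulr_sumr; apply: ler_sum => Ms _.
apply: le_trans (term Ms); case: ifP => _; [by rewrite mulrC | by rewrite mulr0].
Qed.
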